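(* Let $G$ be an Oliver group and $N\trianglelefteq G$ a normal subgroup such that $\operatorname{Ind}_N^G:\operatorname{RO}(N)\to\operatorname{RO}(G)$ is a monomorphism. Let $V$ be an $\mathbb{R}N$-module satisfying, with respect to the group $N$, the following three conditions: (i) (weak gap condition) $\dim V^P\ge 2\dim V^H$ for every subgroup $P\le N$ of prime power order and every subgroup $H$ with $P<H\le N$; (ii) $\dim V^P\ge 5$ for every subgroup $P\le N$ of prime power order, and $\dim V^H\ge 2$ for every pseudocyclic subgroup $H\le N$; (iii) every pseudocyclic subgroup of $N$ occurs as an isotropy subgroup of the action of $N$ on $V$. Then $W=\operatorname{Ind}_N^G(V)$ satisfies conditions (i)–(iii) as an $\mathbb{R}G$-module, with $N$ replaced by $G$ throughout.
   Context: An Oliver group is a finite group $G$ for which there is no chain of subgroups $P\trianglelefteq H\trianglelefteq G$ with $P$ and $G/H$ of prime power order and $H/P$ cyclic. A finite group $K$ is pseudocyclic if for some prime $p$ it contains a normal $p$-subgroup $P$ with $K/P$ cyclic. $\operatorname{RO}(K)$ is the real representation group. $V^H$ is the subspace fixed by $H$; an isotropy subgroup of an action is a stabilizer $\{g : gv=v\}$ of some vector $v$. *)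

(* Defs.v *)
From HB Require Import structures.
From mathcomp Require Import all_boot all_order all_algebra all_fingroup all_solvable.
From mathcomp Require Import mxrepresentation.
Set Implicit Arguments. Unset Strict Implicit. Unset Printing Implicit Defensive.
Import GRing.Theory Num.Theory.


Local Open Scope group_scope.
Section Defs.
Variables (R : rcfType) (gT : finGroupType).

(* P has prime power order (the trivial group included). *)
Definition prime_power_group (P : {group gT}) : Prop :=
  exists p, prime p /\ p.-group P.

Definition oliver_group (G : {group gT}) : Prop :=
  ~ exists (P H : {group gT}),
      [/\ P <| H, H <| G, prime_power_group P,
          (exists q, prime q /\ q.-group (G / H)) & cyclic (H / P)].

Definition pseudocyclic (K : {group gT}) : Prop :=
  exists p, prime p /\
    exists P : {group gT}, [&& P <| K, p.-group P & cyclic (K / P)].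

Definition fixmx n (rho : gT -> 'M[R]_n) (H : {set gT}) : 'M[R]_n :=
  (\bigcap_(x in H) kermx ((rho x - 1%:M)%R))%MS.

Definition fixdim n (rho : gT -> 'M[R]_n) (H : {set gT}) : nat :=
  \rank (fixmx rho H).

Definition isotropy (K : {set gT}) n (rho : gT -> 'M[R]_n) (H : {set gT}) :=
  exists v : 'rV[R]_n, H = [set g in K | (v *m rho g)%R == v].

Definition cond_i (K : {group gT}) n (rho : gT -> 'M[R]_n) : Prop :=
  forall P H : {group gT}, P \subset K -> prime_power_group P ->
    P \proper H -> H \subset K -> 2 * fixdim rho H <= fixdim rho P.

Definition cond_ii (K : {group gT}) n (rho : gT -> 'M[R]_n) : Prop :=
  (forall P : {group gT}, P \subset K -> prime_power_group P ->
     5 <= fixdim rho P) /\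
  (forall H : {group gT}, H \subset K -> pseudocyclic H -> 2 <= fixdim rho H).

Definition cond_iii (K : {group gT}) n (rho : gT -> 'M[R]_n) : Prop :=
  forall H : {group gT}, H \subset K -> pseudocyclic H -> isotropy K rho H.

(* Induced representation Ind_N^G: W = (+)_i V t_i, with t_i a right
   transversal of N in G (G = disjoint union of N t_i); the (i,j) block of
   Ind(g) is rho (t_i g t_j^-1) when this lies in N, and 0 otherwise. *)
Definition rtrans (G N : {group gT}) (i : nat) : gT :=
  nth 1%g (enum (transversal (rcosets N G) G)) i.

Definition ind_mx (G N : {group gT}) n (rho : gT -> 'M[R]_n) :
    gT -> 'M[R]_(\sum_(i < #|G : N|) n) :=
  fun g => (\mxblock_(i < #|G : N|, j < #|G : N|)
     (let h := (rtrans G N i * g * (rtrans G N j)^-1)%g in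
      if h \in N then rho h else 0 : 'M[R]_n))%R.

Definition rsim (K : {set gT}) n1 (r1 : gT -> 'M[R]_n1) n2 (r2 : gT -> 'M[R]_n2) :=
  exists B : 'M[R]_(n1, n2),
    [/\ n1 = n2, row_free B & forall x, x \in K -> (r1 x *m B = B *m r2 x)%R].

Definition dsum n1 (r1 : gT -> 'M[R]_n1) n2 (r2 : gT -> 'M[R]_n2) :
    gT -> 'M[R]_(n1 + n2) :=
  fun x => block_mx (r1 x) 0%R 0%R (r2 x).

(* [r1] = [r2] in the Grothendieck group RO(K) of real representations. *)
Definition ro_eq (K : {set gT}) n1 (r1 : gT -> 'M[R]_n1) n2 (r2 : gT -> 'M[R]_n2) :=
  exists m (s : gT -> 'M[R]_m), mx_repr K s /\ rsim K (dsum r1 s) (dsum r2 s).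

(* Ind_N^G : RO(N) -> RO(G) is a monomorphism, i.e. has trivial kernel:
   [Ind V1] - [Ind V2] = 0 implies [V1] - [V2] = 0. *)
Definition ind_mono (G N : {group gT}) : Prop :=
  forall n1 (r1 : gT -> 'M[R]_n1) n2 (r2 : gT -> 'M[R]_n2),
    mx_repr N r1 -> mx_repr N r2 ->
    ro_eq G (ind_mx G N r1) (ind_mx G N r2) -> ro_eq N r1 r2.

End Defs.

(* Main.v *)
Require Import Defs.
From HB Require Import structures.
From mathcomp Require Import all_boot all_order all_algebra all_fingroup all_solvable.
From mathcomp Require Import mxrepresentation.
Set Implicit Arguments. Unset Strict Implicit. Unset Printing Implicit Defensive.
Import GRing.Theory Num.Theory.
From mathcomp Require Import zify.

Lemma arith1 p h k fH fP : 0 < p -> p * fP = h * fH -> h = k * p -> 2 <= k -> 2 * fH <= fP.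
Proof. move=> *; nia. Qed.

Lemma arith2 a b c d e f g x: 0 < c -> 0 < e -> a * b = c * d -> e * f = x * g -> 2 * g <= d -> a * x <= e * c -> 2 * f <= b.
Proof.
move=> c0 e0 e1 e2 le1 le2.
have h1 : e * c * (2 * f) = c * x * (2 * g) by nia.
have h2 : c * x * (2 * g) <= c * x * d by rewrite leq_mul2l le1 orbT.
have h3 : c * x * d = x * (a * b) by nia.
have h4 : x * (a * b) <= e * c * b by rewrite mulnA [x * a]mulnC leq_mul2r le2 orbT.
have : e * c * (2 * f) <= e * c * b by rewrite h1 (leq_trans h2) // h3.
by rewrite leq_pmul2l // muln_gt0 e0.
Qed.

Local Open Scope group_scope.

Section Pseudo.
Variable gT : finGroupType.

Lemma pseudocyclicS (H K : {group gT}) : K \subset H -> pseudocyclic H -> pseudocyclic K.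
Proof.
move=> sKH [p [pp [Q /and3P[nQH pQ cHQ]]]].
exists p; split=> //; exists (K :&: Q)%G; apply/and3P; split.
- exact: normalGI sKH nQH.
- exact: pgroupS (subsetIr _ _) pQ.
- have nQK : K \subset 'N(Q) := subset_trans sKH (normal_norm nQH).
  have := second_isog nQK; rewrite setIC => /isog_cyclic->.
  exact: cyclicS (quotientS _ sKH) cHQ.
Qed.

Lemma pseudocyclicJ (K : {group gT}) x : pseudocyclic K -> pseudocyclic (K :^ x)%G.
Proof.
move=> [p [pp [Q /and3P[nQK pQ cKQ]]]].
exists p; split=> //; exists (Q :^ x)%G; apply/and3P; split.
- by rewrite normalJ.
- by rewrite pgroupJ.
- have := morphim_cyclic (quotm_morphism (conjgm_morphism K x) nQK) cKQ.
  by rewrite morphim_quotm !morphim_conj setIid (setIidPr (normal_sub nQK)).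
Qed.
End Pseudo.
Section Fix.
Variables (R : rcfType) (gT : finGroupType) (n : nat) (rho : gT -> 'M[R]_n).
Local Open Scope ring_scope.

Lemma fixmxP m (A : 'M[R]_(m, n)) (H : {set gT}) :
  reflect (forall x, x \in H -> A *m rho x = A) (A <= fixmx rho H)%MS.
Proof.
apply: (iffP sub_bigcapmxP) => [hA x Hx | hA x Hx].
  by have := hA x Hx; rewrite sub_kermx mulmxBr mulmx1 subr_eq0 => /eqP.
by rewrite sub_kermx mulmxBr mulmx1 hA ?subrr.
Qed.

Lemma idem_rank (e : 'M[R]_n) : e *m e = e -> \tr e = (\rank e)%:R.
Proof.
move=> ee.
have eCD := mulmx_base e.
set C := col_base e in eCD; set D := row_base e in eCD.
have fD : row_free D := row_base_free e.
have fC : row_full C := col_base_full e.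
clearbody C D.
have DC : D *m C = 1%:M.
  apply: (row_free_inj fD); rewrite mul1mx.
  apply: (row_full_inj fC).
  by rewrite !mulmxA eCD -mulmxA eCD ee.
by rewrite -{1}eCD mxtrace_mulC DC mxtrace1.
Qed.

Lemma fixdim_trace (H : {group gT}) : mx_repr H rho ->
  ((#|H| * fixdim rho H)%N%:R : R) = \sum_(h in H) \tr (rho h).
Proof.
move=> rH.
have HR : (#|H|%:R : R) != 0 by rewrite pnatr_eq0 -lt0n cardG_gt0.
pose S := \sum_(h in H) rho h.
pose e := (#|H|%:R)^-1 *: S.
have SJ x : x \in H -> S *m rho x = S.
  move=> Hx; rewrite /S mulmx_suml [RHS](reindex_astabs 'R x) ?astabsR //=.
  by apply: eq_bigr => h Hh; rewrite (proj2 rH h x Hh Hx).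
have eJ x : x \in H -> e *m rho x = e by move=> Hx; rewrite -scalemxAl SJ.
have ee : e *m e = e.
  rewrite {2}/e -scalemxAr /S mulmx_sumr (eq_bigr (fun _ => e)) //.
  by rewrite sumr_const -scaler_nat scalerA mulVf // scale1r.
have fixe : (fixmx rho H *m e = fixmx rho H).
  rewrite /e -scalemxAr /S mulmx_sumr (eq_bigr (fun _ => fixmx rho H)).
    by rewrite sumr_const -scaler_nat scalerA mulVf // scale1r.
  by move=> h Hh; apply/(fixmxP _ _ (submx_refl _)).
have eqr : \rank e = fixdim rho H.
  apply/eqP; rewrite eqn_leq; apply/andP; split; apply: mxrankS.
    by apply/fixmxP.
  by rewrite -fixe submxMl.
rewrite natrM -eqr -idem_rank // /e mxtraceZ mulrA mulfV // mul1r.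
by rewrite /S raddf_sum.
Qed.
End Fix.
Lemma repr_sub (R : rcfType) (gT : finGroupType) (A B : {group gT}) n (r : gT -> 'M[R]_n) :
  A \subset B -> mx_repr B r -> mx_repr A r.
Proof.
move=> sAB [r1 rM]; split=> // x y Ax Ay.
by apply: rM; apply: (subsetP sAB).
Qed.

Section Ind.
Variables (R : rcfType) (gT : finGroupType) (G N : {group gT}).
Hypothesis nN : N <| G.
Variables (n : nat) (rho : gT -> 'M[R]_n).
Hypothesis rN : mx_repr N rho.
Local Notation m := #|G : N|.
Local Notation t := (rtrans G N).
Local Notation I := (ind_mx G N rho).

Let X := transversal (rcosets N G) G.
Let trX : is_transversal X (rcosets N G) G :=
  transversalP (rcosets_partition (normal_sub nN)).
Let sizeX : size (enum X) = m.
Proof. by rewrite -cardE (card_transversal trX). Qed.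

Lemma t_in (i : 'I_m) : t i \in G.
Proof.
have : t i \in enum X by rewrite /rtrans mem_nth // sizeX.
by rewrite mem_enum; apply: (subsetP (transversal_sub trX)).
Qed.

Lemma t_uniq x : x \in G ->
  exists j : 'I_m, forall k : 'I_m, (x * (t k)^-1 \in N) = (k == j).
Proof.
move=> Gx.
have PB : N :* x \in rcosets N G.
  by rewrite mem_rcosets mulSGid ?normal_sub.
have XB := setI_transversal_pblock trX 1 PB.
set r := transversal_repr 1 X (N :* x) in XB.
have : r \in X :&: (N :* x) by rewrite XB set11.
case/setIP=> Xr Br.
have ir : index r (enum X) < m by rewrite -sizeX index_mem mem_enum.
exists (Ordinal ir) => k.
have tj : t (Ordinal ir) = r by rewrite /rtrans /= nth_index ?mem_enum.
rewrite -mem_rcoset; apply/idP/eqP => [xk | ->]; last first.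
  by rewrite tj; move/rcoset_eqP: Br => ->; apply: rcoset_refl.
have tkB : t k \in N :* x by move/rcoset_eqP: xk => ->; apply: rcoset_refl.
have Xtk : t k \in X.
  by rewrite -mem_enum /rtrans mem_nth // sizeX.
have : t k \in X :&: (N :* x) by rewrite inE Xtk tkB.
rewrite XB => /set1P e0.
have : t k = t (Ordinal ir) by rewrite tj.
rewrite /rtrans => e.
apply: val_inj => /=.
by apply/eqP; rewrite -(nth_uniq 1 _ _ (enum_uniq (mem X))) ?sizeX ?e.
Qed.

Lemma ind_repr : mx_repr G I.
Proof.
split.
  rewrite /ind_mx -[(1%:M)%R](@mxdiagZ _ _ (fun _ => n) 1%R) /mxdiag.
  apply/eq_mxblockP => i j; rewrite /= conform_mx_id mulg1.
  have [j0 hj0] := t_uniq (t_in i).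
  have e : i == j0 by rewrite -hj0 mulgV group1.
  rewrite hj0 -(eqP e) eq_sym.
  by case: eqP => // ->; rewrite mulgV (proj1 rN).
move=> x y Gx Gy.
rewrite /ind_mx mul_mxblock; apply/eq_mxblockP => i k /=.
have [j0 hj0] := t_uniq (groupM (t_in i) Gx).
rewrite (bigD1 j0) //= big1 ?addr0; last first.
  by move=> j /negbTE nj; rewrite hj0 nj mul0mx.
have aN : t i * x * (t j0)^-1 \in N by rewrite hj0.
have eab : t i * (x * y) * (t k)^-1 =
    (t i * x * (t j0)^-1) * (t j0 * y * (t k)^-1) by rewrite !mulgA mulgKV.
rewrite hj0 eqxx eab groupMl //.
case: ifP => bN; last by rewrite mulmx0.
by rewrite (proj2 rN).
Qed.

Lemma ind_trace h : h \in G ->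
  (\tr (I h) = \sum_(i < m) (if h \in N then \tr (rho (h ^ (t i)^-1)) else 0))%R.
Proof.
move=> Gh; rewrite /ind_mx mxtrace_mxblock; apply: eq_bigr => i _ /=.
have nNt : (t i)^-1 \in 'N(N) by rewrite (subsetP (normal_norm nN)) ?groupV ?t_in.
have -> : t i * h * (t i)^-1 = h ^ (t i)^-1 by rewrite conjgE invgK mulgA.
rewrite memJ_norm //.
by case: ifP => _ //; rewrite mxtrace0.
Qed.

Lemma ind_fix (H : {group gT}) : H \subset G ->
  (#|H| * fixdim I H =
  #|H :&: N| * \sum_(i < m) fixdim rho ((H :&: N) :^ (t i)^-1))%N.
Proof.
move=> sHG; apply/eqP; rewrite -(eqr_nat R) (fixdim_trace (repr_sub sHG ind_repr)).
rewrite (eq_bigr _ (fun h Hh => ind_trace (subsetP sHG h Hh))) exchange_big /=.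
rewrite big_distrr natr_sum; apply/eqP; apply: eq_bigr => i _.
set s := (t i)^-1.
have sKN : (H :&: N) :^ s \subset N.
  rewrite -{2}(normP (subsetP (normal_norm nN) s _)) ?groupV ?t_in // conjSg.
  exact: subsetIr.
rewrite -(cardJg _ s) -[(H :&: N) :^ s]/(gval ((H :&: N) :^ s)%G).
rewrite (fixdim_trace (repr_sub sKN rN)) /=.
rewrite -big_mkcondr /= /conjugate big_imset /=; last by move=> a b _ _; apply: conjg_inj.
by apply: eq_bigl => h; rewrite inE.
Qed.

Let sKJ (K : {group gT}) (i : 'I_m) : (K :&: N) :^ (t i)^-1 \subset N.
Proof.
apply/subsetP => y /imsetP[z /setIP[_ Nz] ->].
by rewrite memJ_norm // (subsetP (normal_norm nN)) ?groupV ?t_in.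
Qed.

Let ppJ (P : {group gT}) (i : 'I_m) : prime_power_group P ->
  prime_power_group ((P :&: N) :^ (t i)^-1)%G.
Proof.
case=> p [pp pP]; exists p; split=> //=.
by rewrite pgroupJ; apply: pgroupS pP; apply: subsetIl.
Qed.

Let index_le (P : {group gT}) : P \subset G -> (#|P| <= m * #|P :&: N|)%N.
Proof.
move=> sPG.
have := mul_cardG P N.
have le1 : (#|(P * N)%g| <= #|G|)%N.
  by apply: subset_leq_card; apply: mul_subG => //; apply: normal_sub.
rewrite -(Lagrange (normal_sub nN)) in le1 => e.
have : (#|P| * #|N| <= #|N| * m * #|P :&: N|)%N.
  by rewrite e leq_mul2r le1 orbT.
rewrite mulnC -mulnA leq_pmul2l ?cardG_gt0 //.
Qed.

Lemma cond_i_ind : cond_i N rho -> cond_i G I.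
Proof.
move=> ci P H sPG ppP pPH sHG.
have sPH := proper_sub pPH.
have eP := ind_fix sPG; have eH := ind_fix sHG.
have sKK : P :&: N \subset H :&: N by apply: setSI.
have P0 := cardG_gt0 P.
case: (eqVproper sKK) => [eK | pK].
  rewrite eK in eP; rewrite -eH in eP.
  have /dvdnP[k ek] := cardSg sPH.
  have lt := proper_card pPH.
  have k2 : (2 <= k)%N.
    by move: lt; rewrite ek; case: k {ek} => [|[|k]] //=; rewrite ?mul0n ?mul1n ?ltnn.
  exact: arith1 P0 eP ek k2.
have Dle : (2 * \sum_(i < m) fixdim rho ((H :&: N) :^ (t i)^-1) <=
            \sum_(i < m) fixdim rho ((P :&: N) :^ (t i)^-1))%N.
  rewrite big_distrr /=; apply: leq_sum => i _.
  apply: (ci ((P :&: N) :^ (t i)^-1)%G ((H :&: N) :^ (t i)^-1)%G) => //=.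
  - exact: ppJ.
  - by rewrite properJ.
have ix : (#|P| * #|H :&: N| <= #|H| * #|P :&: N|)%N.
  rewrite (mul_cardG P (H :&: N)%G) /= setIA (setIidPl sPH) leq_mul2r.
  by rewrite subset_leq_card ?orbT // mul_subG // subIset // subxx.
apply: arith2 (cardG_gt0 (P :&: N)%G) (cardG_gt0 H) eP eH Dle ix.
Qed.

Lemma cond_ii_ind : cond_ii N rho -> cond_ii G I.
Proof.
move=> [c5 c2]; split.
  move=> P sPG ppP.
  have eP := ind_fix sPG.
  have D5 : (5 * m <= \sum_(i < m) fixdim rho ((P :&: N) :^ (t i)^-1))%N.
    have -> : (5 * m = \sum_(i < m) 5)%N by rewrite sum_nat_const card_ord mulnC.
    apply: leq_sum => i _.
    by apply: (c5 ((P :&: N) :^ (t i)^-1)%G) => //=; apply: ppJ.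
  have P0 := cardG_gt0 P.
  rewrite -(leq_pmul2l P0) eP mulnC.
  apply: (leq_trans _ (leq_mul (leqnn _) D5)).
  by rewrite mulnCA leq_mul2l mulnC index_le ?orbT.
move=> H sHG pH.
have eH := ind_fix sHG.
have D2 : (2 * m <= \sum_(i < m) fixdim rho ((H :&: N) :^ (t i)^-1))%N.
  have -> : (2 * m = \sum_(i < m) 2)%N by rewrite sum_nat_const card_ord mulnC.
  apply: leq_sum => i _.
  apply: (c2 ((H :&: N) :^ (t i)^-1)%G) => //=.
  by apply: pseudocyclicJ; apply: (pseudocyclicS (subsetIl H N)).
have H0 := cardG_gt0 H.
rewrite -(leq_pmul2l H0) eH mulnC.
apply: (leq_trans _ (leq_mul (leqnn _) D2)).
by rewrite mulnCA leq_mul2l mulnC index_le ?orbT.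
Qed.

Lemma comp_ind (c : 'I_m -> 'rV[R]_n) x (j : 'I_m) : x \in G ->
  exists i : 'I_m, (forall k : 'I_m, (t k * x * (t j)^-1 \in N) = (k == i)) /\
  submxrow ((\mxrow_k c k) *m I x)%R j = (c i *m rho (t i * x * (t j)^-1))%R.
Proof.
move=> Gx.
have [i hi] := t_uniq (groupM (t_in j) (groupVr Gx)).
have hk (k : 'I_m) : (t k * x * (t j)^-1 \in N) = (k == i).
  by rewrite -(hi k) -groupV !invMg invgK !mulgA.
exists i; split=> //.
rewrite /ind_mx mul_mxrow_mxblock mxrowK (bigD1 i) //= big1 ?addr0.
  by rewrite hk eqxx.
by move=> k /negbTE nk; rewrite hk nk mulmx0.
Qed.

Let unitI h : h \in G -> I h \in unitmx.
Proof. exact: (repr_mx_unit (MxRepresentation ind_repr)). Qed.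

Let unitR a : a \in N -> rho a \in unitmx.
Proof. exact: (repr_mx_unit (MxRepresentation rN)). Qed.

Let nz_mul (u : 'rV[R]_n) a : a \in N -> u != 0%R -> (u *m rho a)%R != 0%R.
Proof.
move=> Na; apply: contra => /eqP e.
by rewrite -[u](mulmxK (unitR Na)) e mul0mx.
Qed.

Lemma cond_iii_ind : cond_ii N rho -> cond_iii N rho -> cond_iii G I.
Proof.
move=> [_ c2] ciii H sHG pH.
have m0 : (0 < m)%N := indexg_gt0 G N.
pose i0 : 'I_m := Ordinal m0.
pose s := t i0.
have Gs : s \in G by apply: t_in.
have nNs : s^-1 \in 'N(N) by rewrite (subsetP (normal_norm nN)) ?groupV.
pose K' := ((H :&: N) :^ s^-1)%G.
have sK'N : K' \subset N := sKJ H i0.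
have pK' : pseudocyclic K' := pseudocyclicJ _ (pseudocyclicS (subsetIl H N) pH).
have [v [nzv ev]] : exists v : 'rV[R]_n, v != 0%R /\
    (K' : {set gT}) = [set g in N | (v *m rho g)%R == v].
  have [v0 e0] := ciii K' sK'N pK'.
  case: (eqVneq v0 0%R) => [v00 | nz]; last by exists v0.
  have K'N : (K' : {set gT}) = N.
    by rewrite e0 v00; apply/setP => g; rewrite !inE mul0mx eqxx andbT.
  have := c2 K' sK'N pK'.
  rewrite /fixdim; set F := fixmx rho K' => rF.
  have nzF : F != 0%R by rewrite -mxrank_eq0 -lt0n; apply: leq_trans rF.
  have [r nzr] : exists r, row r F != 0%R.
    apply/existsP; apply: contraR nzF => /existsPn hr.
    by apply/eqP/row_matrixP => r; rewrite row0; apply/eqP/negbNE/hr.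
  exists (row r F); split=> //; rewrite K'N; apply/setP => g; rewrite inE.
  case Ng : (g \in N) => //=; apply/esym/eqP.
  by move/fixmxP: (row_sub r F); apply; rewrite K'N.
pose c := fun i : 'I_m => if i == i0 then v else 0%R.
pose w := (\sum_(h in H) (\mxrow_k c k) *m I h)%R.
have wE : w = (\mxrow_j submxrow w j)%R by rewrite submxrowK.
have fixH g : g \in H -> (w *m I g)%R = w.
  move=> Hg; rewrite /w mulmx_suml [RHS](reindex_astabs 'R g) ?astabsR //=.
  apply: eq_bigr => h Hh.
  by rewrite -mulmxA (proj2 ind_repr h g) ?(subsetP sHG).
have conjE x : s * x * s^-1 = x ^ s^-1 by rewrite conjgE invgK mulgA.
have eb h : h \in H ->
    submxrow ((\mxrow_k c k) *m I h)%R i0 = ((h \in N)%:R *: v)%R.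
  move=> Hh; have Gh := subsetP sHG h Hh.
  have [i [hu ->]] := comp_ind c i0 Gh.
  have := hu i0; rewrite -/s conjE memJ_norm // => hN.
  case Nh : (h \in N); rewrite Nh in hN.
    move/esym/eqP: hN => <-; rewrite /c eqxx scale1r -/s conjE.
    have : h ^ s^-1 \in K' by rewrite /K' /= memJ_conjg inE Hh Nh.
    by rewrite ev inE => /andP[_ /eqP].
  by rewrite /c eq_sym -hN scale0r mul0mx.
pose k := (\sum_(h in H) (h \in N))%N.
have k0 : (0 < k)%N by rewrite /k (bigD1 1) //= group1.
have ck : submxrow w i0 = (k%:R *: v)%R.
  rewrite /w submxrow_sum (eq_bigr _ eb) -scaler_suml /k natr_sum.
  by [].
have nzc0 : submxrow w i0 != 0%R.
  by rewrite ck scaler_eq0 negb_or pnatr_eq0 -lt0n k0.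
exists w; apply/setP => g; rewrite inE; apply/idP/idP.
  by move=> Hg; rewrite (subsetP sHG) //= fixH.
case/andP => Gg /eqP wg.
have [jg hjg] := t_uniq (groupM Gs Gg).
have aN : s * g * (t jg)^-1 \in N by rewrite hjg.
have [i [hu cg]] := comp_ind (fun j => submxrow w j) jg Gg.
have ii0 : i0 == i by rewrite -hu.
rewrite -wE wg -(eqP ii0) in cg.
have nzj : submxrow w jg != 0%R by rewrite cg nz_mul.
have [h Hh nzh] : exists2 h, h \in H & submxrow ((\mxrow_k c k) *m I h)%R jg != 0%R.
  apply/exists_inP; apply: contraR nzj => /exists_inPn hz.
  rewrite /w submxrow_sum big1 // => h Hh.
  by apply/eqP/negbNE/hz.
have Gh := subsetP sHG h Hh.
have [ih [huh ch]] := comp_ind c jg Gh.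
have ihi0 : ih == i0.
  by apply: contraR nzh => nih; rewrite ch /c (negbTE nih) mul0mx.
have bN : s * h * (t jg)^-1 \in N by rewrite huh eq_sym ihi0.
have n0N : g * h^-1 \in N.
  have : (s * g * (t jg)^-1) * (s * h * (t jg)^-1)^-1 \in N.
    by rewrite groupM ?groupV.
  have -> : (s * g * (t jg)^-1) * (s * h * (t jg)^-1)^-1 = (g * h^-1) ^ s^-1.
    by rewrite -conjE !invMg invgK !mulgA mulgKV.
  by rewrite memJ_norm.
have Gn0 : g * h^-1 \in G by rewrite groupM // groupV.
have egn : g = (g * h^-1) * h by rewrite mulgKV.
have wn0 : (w *m I (g * h^-1))%R = w.
  apply: (can_inj (mulmxK (unitI Gh))); rewrite [RHS]fixH //.
  by rewrite -mulmxA -(proj2 ind_repr) // -egn wg.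
have [i2 [hu2 c2']] := comp_ind (fun j => submxrow w j) i0 Gn0.
have i2e : i0 == i2 by rewrite -hu2 -/s conjE memJ_norm.
rewrite -wE wn0 -(eqP i2e) ck -scalemxAl in c2'.
have nzk : (k%:R != 0 :> R)%R by rewrite pnatr_eq0 -lt0n.
have fv := can_inj (scalerK nzk) c2'.
have : s * (g * h^-1) * s^-1 \in K'.
  by rewrite ev inE -/s conjE memJ_norm // n0N /= -conjE -fv.
rewrite conjE /K' /= memJ_conjg inE => /andP[Hn0 _].
by rewrite egn groupM.
Qed.
End Ind.

Theorem mainTheorem7 (R : rcfType) (gT : finGroupType) (G N : {group gT})
  (n : nat) (rho : gT -> 'M[R]_n) :
  oliver_group G -> (N <| G)%g -> ind_mono R G N ->
  mx_repr N rho ->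
  cond_i N rho -> cond_ii N rho -> cond_iii N rho ->
  cond_i G (ind_mx G N rho) /\ cond_ii G (ind_mx G N rho) /\
  cond_iii G (ind_mx G N rho).
Proof.
move=> _ nN _ rN ci cii ciii; split; first exact: (cond_i_ind nN rN).
split; first exact: (cond_ii_ind nN rN).
exact: (cond_iii_ind nN rN).
Qed.
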